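(* Let $X$ be a nonempty set, $\circ:X\times X\to X$ a binary operation, and $p,q>0$ constants. Let \[ S:=\Big\{\tfrac{a}{a+b}\ \Big|\ a,b>0 \text{ and there is an operation } *:X\times X\to X \text{ such that every } (\circ,p,q)\text{-convex function is } ( *,a,b)\text{-convex}\Big\}. \] Then $1-S\subseteq S$ (where $1-S=\{1-s\mid s\in S\}$), and $S$ is a dense multiplicative subsemigroup of $[0,1]$ (i.e., $S\subseteq[0,1]$, $st\in S$ whenever $s,t\in S$, and $S$ is dense in $[0,1]$).
   Context: Given a nonempty set $X$, a binary operation $\star:X\times X\to X$ and constants $a,b>0$, a function $f:X\to\mathbb{R}$ is called $(\star,a,b)$-convex if $f(x\star y)\leq a f(x)+b f(y)$ for all $x,y\in X$. *)

(* Defs.v *)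
From Stdlib Require Import Reals.
Open Scope R_scope.

Definition op_convex {X : Type} (op : X -> X -> X) (a b : R) (f : X -> R) : Prop :=
  forall x y : X, f (op x y) <= a * f x + b * f y.

Definition Sset {X : Type} (circ : X -> X -> X) (p q : R) (s : R) : Prop :=
  exists a b : R, 0 < a /\ 0 < b /\ s = a / (a + b) /\
    exists star : X -> X -> X,
      forall f : X -> R, op_convex circ p q f -> op_convex star a b f.

(* Main.v *)
Require Import Defs.
From Stdlib Require Import Reals Lra Psatz.
Open Scope R_scope.

Section H.
Variables (X : Type) (circ : X -> X -> X) (p q : R).

Lemma S_compl s : Sset circ p q s -> Sset circ p q (1 - s).
Proof.
  intros (a & b & ha & hb & hs & star & H).
  exists b, a. split; [lra|]. split; [lra|]. split.
  - subst s. field. lra.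
  - exists (fun x y => star y x). intros f Hf x y. specialize (H f Hf y x). lra.
Qed.

Lemma S_bounds s : Sset circ p q s -> 0 < s < 1.
Proof.
  intros (a & b & ha & hb & hs & _).
  assert (E : s * (a + b) = a) by (subst s; field; lra).
  nra.
Qed.

Lemma S_prod s t : Sset circ p q s -> Sset circ p q t -> Sset circ p q (s * t).
Proof.
  intros (a & b & ha & hb & hs & star1 & H1) (c & d & hc & hd & ht & star2 & H2).
  exists (a * c), (b * c + d * (a + b)).
  split; [nra|]. split; [nra|]. split.
  - subst s t. field. split; nra.
  - exists (fun x y => star2 (star1 x y) (star1 y y)). intros f Hf x y.
    pose proof (H1 f Hf x y) as A. pose proof (H1 f Hf y y) as B.
    pose proof (H2 f Hf (star1 x y) (star1 y y)) as C.
    nra.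
Qed.

Lemma S_pow s n : Sset circ p q s -> Sset circ p q (s ^ S n).
Proof.
  intros Hs. induction n.
  - simpl. rewrite Rmult_1_r. exact Hs.
  - change (s ^ S (S n)) with (s * s ^ S n). apply S_prod; assumption.
Qed.

Lemma S_base : 0 < p -> 0 < q -> Sset circ p q (p / (p + q)).
Proof.
  intros hp hq. exists p, q. split; [lra|]. split; [lra|]. split; [reflexivity|].
  exists circ. intros f Hf. exact Hf.
Qed.

End H.

Theorem lemma3p4 (X : Type) (HX : inhabited X) (circ : X -> X -> X) (p q : R)
  (hp : 0 < p) (hq : 0 < q) :
  (forall s, Sset circ p q s -> Sset circ p q (1 - s)) /\
  (forall s, Sset circ p q s -> 0 <= s <= 1) /\
  (forall s t, Sset circ p q s -> Sset circ p q t -> Sset circ p q (s * t)) /\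
  (forall x eps, 0 <= x <= 1 -> 0 < eps ->
     exists s, Sset circ p q s /\ Rabs (s - x) < eps).
Proof.
  split; [apply S_compl|]. split.
  { intros s Hs. apply S_bounds in Hs. lra. }
  split; [apply S_prod|].
  intros x eps Hx He.
  set (s0 := p / (p + q)).
  assert (Hs0 : Sset circ p q s0) by (apply S_base; assumption).
  pose proof (S_bounds _ _ _ _ _ Hs0) as Bs0.
  destruct (pow_lt_1_zero s0 ltac:(rewrite Rabs_right; lra) eps He) as [N HN].
  assert (HsN : Sset circ p q (s0 ^ S N)) by (apply S_pow; exact Hs0).
  specialize (HN (S N) ltac:(lia)).
  set (u := 1 - s0 ^ S N) in *.
  assert (Hu : Sset circ p q u) by (apply S_compl; exact HsN).
  pose proof (S_bounds _ _ _ _ _ HsN) as BN.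
  rewrite Rabs_right in HN by lra.
  assert (Bu : 0 < u < 1) by (unfold u; lra).
  assert (Hgap : 1 - u < eps) by (unfold u; lra).
  assert (L : forall m, (exists s, Sset circ p q s /\ Rabs (s - x) < eps) \/ x < u ^ S m).
  { induction m.
    - destruct (Rlt_or_le x u) as [h|h].
      + right. simpl. lra.
      + left. exists u. split; [exact Hu|]. rewrite Rabs_left1; lra.
    - destruct IHm as [h|h]; [left; exact h|].
      destruct (Rlt_or_le x (u ^ S (S m))) as [h2|h2]; [right; exact h2|].
      left. exists (u ^ S (S m)). split; [apply S_pow; exact Hu|].
      assert (P : 0 < u ^ S m) by (apply pow_lt; lra).
      change (u ^ S (S m)) with (u * u ^ S m) in *.
      rewrite Rabs_left1 by lra. nra. }
  destruct (pow_lt_1_zero u ltac:(rewrite Rabs_right; lra) eps He) as [M HM].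
  destruct (L M) as [h|h]; [exact h|].
  exists (u ^ S M). split; [apply S_pow; exact Hu|].
  specialize (HM (S M) ltac:(lia)).
  assert (P : 0 < u ^ S M) by (apply pow_lt; lra).
  rewrite Rabs_right in HM by lra.
  rewrite Rabs_right; lra.
Qed.
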